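(* Let $n\ge 1$ and let $a_1,\dots,a_n$ be nonnegative integers. Then, as Laurent polynomials in $z_1,\dots,z_n$, $$\mathop{\mathrm{CT}}_{\mathbf z}\frac{(z_1+\cdots+z_n)^{a_1+\cdots+a_n}}{z_1^{a_1}\cdots z_n^{a_n}}\prod_{1\le i\ne j\le n}\left(1-\frac{z_i}{z_j}\right)^{a_j}=\frac{(a_1+a_2+\cdots+a_n)!}{a_1!\,a_2!\cdots a_n!},$$ where $\mathop{\mathrm{CT}}_{\mathbf z}$ denotes the coefficient of $z_1^0\cdots z_n^0$. *)

(* Defs.v *)
From HB Require Import structures.
From mathcomp Require Import all_boot all_order all_algebra.
From mathcomp Require Import fraction.
From mathcomp.multinomials Require Import mpoly.
Set Implicit Arguments. Unset Strict Implicit. Unset Printing Implicit Defensive.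
Import Order.TTheory GRing.Theory Num.Theory.
Local Open Scope ring_scope.

(* Laurent polynomials in z_1..z_n with integer coefficients are viewed
   inside the field of fractions of Z[z_1..z_n]. *)
Notation ratfun n := {fraction {mpoly int[n]}}.

Definition tofracp (n : nat) (p : {mpoly int[n]}) : ratfun n :=
  @FracField.tofrac _ p.

Definition zvar (n : nat) (i : 'I_n) : ratfun n := tofracp ('X_i : {mpoly int[n]}).

(* [laurent_CT f c]: f is a Laurent polynomial (f = P / z^m with P a
   polynomial and z^m a monomial) and its constant term (coefficient of
   z_1^0 ... z_n^0) is c, i.e. the coefficient of z^m in P is c.
   (This is independent of the chosen representation.) *)
Definition laurent_CT (n : nat) (f : ratfun n) (c : int) : Prop :=
  exists (P : {mpoly int[n]}) (m : 'X_{1..n}),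
    f = tofracp P / tofracp ('X_[m] : {mpoly int[n]}) /\ P@_m = c.

(* Main.v *)
Require Import Defs.
From HB Require Import structures.
From mathcomp Require Import all_boot all_order all_algebra.
From mathcomp Require Import fraction.
From mathcomp.multinomials Require Import mpoly.
From mathcomp Require Import ring.
Import Order.TTheory GRing.Theory Num.Theory.
Local Open Scope ring_scope.

Module Helpers.
Set Implicit Arguments. Unset Strict Implicit. Unset Printing Implicit Defensive.
Section Lag.
Variables (F : fieldType) (I : finType) (A : {set I}) (x : I -> F).
Hypothesis xinj : {in A &, injective x}.

Let k := #|A|.
Let Lp j := \prod_(i in A | i != j) ('X - (x i)%:P).
Let Q j := \prod_(i in A | i != j) (x j - x i).

Lemma Lp_seq j : Lp j = \prod_(p <- [seq x i | i <- enum A & i != j]) ('X - p%:P).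
Proof. by rewrite big_map big_filter big_enum_cond. Qed.

Lemma size_Lp j : j \in A -> size (Lp j) = k.
Proof.
move=> jA; rewrite Lp_seq size_prod_XsubC size_map.
have := cardD1 j A; rewrite jA /k => ->.
rewrite add1n; congr (_.+1); rewrite cardE {1}/enum_mem -filter_predI; congr size; apply: eq_filter => i; rewrite !inE andbC.
Qed.

Lemma lagrange_sum : \sum_(j in A) x j ^+ k / Q j = \sum_(j in A) x j.
Proof.
have Q0 j : j \in A -> Q j != 0.
  move=> jA; apply/prodf_neq0 => i /andP [iA ij].
  by rewrite subr_eq0; apply/eqP => /xinj eq; move: ij; rewrite eq ?eqxx.
have Lroot j l : l \in A -> l != j -> (Lp j).[x l] = 0.
  move=> lA lj; rewrite /Lp horner_prod (bigD1 l) /=; last by rewrite lA.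
  by rewrite hornerXsubC subrr mul0r.
have Lself j : (Lp j).[x j] = Q j.
  by rewrite /Lp horner_prod; apply: eq_bigr => i _; rewrite hornerXsubC.
set f := \prod_(i in A) ('X - (x i)%:P).
set c := fun j => x j ^+ k / Q j.
set h := 'X^k - f - \sum_(j in A) c j *: Lp j.
have fseq : f = \prod_(p <- [seq x i | i <- enum A]) ('X - p%:P).
  by rewrite big_map big_enum.
have sf : size f = k.+1 by rewrite fseq size_prod_XsubC size_map -cardE.
have lf : f`_k = 1.
  have := lead_coef_prod_XsubC [seq x i | i <- enum A] xpredT id.
  by rewrite -fseq lead_coefE sf.
have hs : (size h <= k)%N.
  apply/leq_sizeP => i ki; rewrite /h !coefB coefXn coef_sum.
  rewrite big1 => [|j jA]; last by rewrite coefZ nth_default ?size_Lp // mulr0.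
  rewrite subr0; move: ki; rewrite leq_eqVlt => /orP [/eqP <-|ki].
    by rewrite eqxx lf subrr.
  by rewrite gtn_eqF // nth_default ?sf // subrr.
have hroot l : l \in A -> h.[x l] = 0.
  move=> lA; rewrite /h !hornerE horner_sum.
  have -> : f.[x l] = 0.
    by rewrite /f horner_prod (bigD1 l) //= hornerXsubC subrr mul0r.
  rewrite (bigD1 l) //= big1 => [|j /andP [jA jl]]; last first.
    by rewrite hornerZ Lroot ?mulr0 // eq_sym.
  by rewrite hornerZ Lself /c divfK ?Q0 // addr0 subr0 subrr.
have h0 : h = 0.
  apply/eqP; apply/negPn/negP => hn0.
  have hr : all (root h) [seq x i | i <- enum A].
    apply/allP => y /mapP [l]; rewrite mem_enum => lA ->; apply/rootP; exact: hroot.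
  have hu : uniq [seq x i | i <- enum A].
    rewrite map_inj_in_uniq ?enum_uniq //.
    by move=> i j; rewrite !mem_enum; apply: xinj.
  have := max_poly_roots hn0 hr hu; rewrite size_map -cardE => lt.
  by have := leq_trans lt hs; rewrite ltnn.
case k0 : k => [|k'].
  move: k0; rewrite /k => /cards0_eq ->; by rewrite !big_set0.
have := congr1 (fun p : {poly F} => p`_k') h0; rewrite /h !coefB coefXn coef_sum coef0.
rewrite k0 (ltn_eqF (ltnSn k')) sub0r.
have -> : f`_k' = - \sum_(j in A) x j.
  have := @coefPn_prod_XsubC _ [seq x i | i <- enum A].
  rewrite size_map -cardE -/k k0 /= -fseq big_map big_enum => -> //.
have Llead j : j \in A -> (Lp j)`_k' = 1.
  move=> jA; have := lead_coef_prod_XsubC (index_enum I) (fun i => (i \in A) && (i != j)) x.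
  by rewrite lead_coefE -/(Lp j) size_Lp // k0.
move=> H.
have E : \sum_(i in A) (c i *: Lp i)`_k' = \sum_(i in A) c i.
  by apply: eq_bigr => j jA; rewrite coefZ Llead // mulr1.
move: H; rewrite E opprK => /eqP; rewrite subr_eq0 => /eqP ->.
by apply: eq_bigr => j _; rewrite /c k0.
Qed.
End Lag.

Section Core.
Variable n : nat.
Local Notation R := {mpoly int[n]}.
Local Notation tf := (@FracField.tofrac R).

Definition sS (S : {set 'I_n}) : R := \sum_(i in S) 'X_i.
Definition QS (S : {set 'I_n}) j : R := \prod_(i in S | i != j) ('X_j - 'X_i).
Definition NS (S : {set 'I_n}) (a : 'I_n -> nat) := (\sum_(i in S) a i)%N.
Definition PS S a : R := sS S ^+ NS S a * \prod_(j in S) QS S j ^+ a j.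
Definition mS (S : {set 'I_n}) (a : 'I_n -> nat) : 'X_{1..n} :=
  [multinom (if i \in S then #|S| * a i else 0)%N | i < n].
Definition decr (a : 'I_n -> nat) j := fun i => if i == j then (a i).-1 else a i.

Lemma X_inj : injective (fun i : 'I_n => ('X_i : R)).
Proof.
move=> i j /= eq; apply/eqP; have := @mcoeffXU n int i i.
rewrite eq mcoeffXU eqxx.
by rewrite eq_sym; case: (i == j) => // /eqP; rewrite eqr_nat.
Qed.

Lemma z_inj : injective (fun i : 'I_n => tf ('X_i : R)).
Proof. by move=> i j /eqP; rewrite tofrac_eq => /eqP /X_inj. Qed.

Lemma PS_rec S a : S != set0 -> (forall j, j \in S -> 0 < a j)%N ->
  PS S a = \sum_(j in S) 'X_j ^+ #|S| * PS S (decr a j).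
Proof.
move=> S0 apos.
have [j0 j0S] := set0Pn _ S0.
have N1 : (0 < NS S a)%N.
  by rewrite /NS (bigD1 j0) //= addn_gt0 apos.
have Ndec j : j \in S -> NS S (decr a j) = (NS S a).-1.
  move=> jS; rewrite /NS (bigD1 j) //= [in RHS](bigD1 j) //= /decr eqxx.
  rewrite (eq_bigr a) => [|i /andP [_ /negbTE ->] //].
  by have := apos j jS; case: (a j).
set z := fun i => tf ('X_i : R).
have hq j : tf (QS S j) = \prod_(i in S | i != j) (z j - z i).
  by rewrite rmorph_prod; apply: eq_bigr => i _; rewrite rmorphB.
have hs : tf (sS S) = \sum_(i in S) z i by rewrite rmorph_sum.
have hP b : tf (PS S b) = tf (sS S) ^+ NS S b * \prod_(j in S) tf (QS S j) ^+ b j.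
  by rewrite /PS rmorphM rmorphXn rmorph_prod; under eq_bigr do rewrite rmorphXn.
have q0 j : j \in S -> tf (QS S j) != 0.
  move=> jS; rewrite hq; apply/prodf_neq0 => i /andP [iS ij].
  by rewrite subr_eq0; apply/eqP => /z_inj eq; move: ij; rewrite eq eqxx.
set s := tf (sS S); set q := fun j => tf (QS S j).
set Pa := \prod_(j in S) q j ^+ a j.
have hdec j : j \in S -> \prod_(l in S) q l ^+ decr a j l = Pa / q j.
  move=> jS; rewrite /Pa (bigD1 j) //= [in RHS](bigD1 j) //= /decr eqxx.
  rewrite (eq_bigr (fun l => q l ^+ a l)) => [|i /andP [_ /negbTE ->] //].
  have -> : q j ^+ a j = q j ^+ (a j).-1 * q j.
    by rewrite -exprSr prednK // apos.
  by rewrite mulrAC mulfK // q0.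
apply/eqP; rewrite -tofrac_eq rmorph_sum /=; apply/eqP.
transitivity (s ^+ (NS S a).-1 * Pa * \sum_(j in S) z j ^+ #|S| / q j); last first.
  rewrite mulr_sumr; apply: eq_bigr => j jS.
  rewrite rmorphM rmorphXn /= hP Ndec // hdec // -/s -/(z j).
  ring.

have L : \sum_(j in S) z j ^+ #|S| / q j = s.
  rewrite /s hs -(lagrange_sum (A := S) (x := z) (fun i j _ _ => @z_inj i j)).
  by apply: eq_bigr => j _; rewrite /q hq.
rewrite L hP -/s.
have -> : s ^+ NS S a = s ^+ (NS S a).-1 * s by rewrite -exprSr prednK.
by rewrite /Pa; ring.
Qed.

Lemma coefXjM k (j : 'I_n) (p : R) (m : 'X_{1..n}) : ('X_j ^+ k * p)@_(U_(j) *+ k + m)%MM = p@_m.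
Proof. by rewrite mpolyXn mulrC mcoeffMX. Qed.

Lemma coefXjM0 (j : 'I_n) (p : R) (m : 'X_{1..n}) : m j = 0%N -> ('X_j * p)@_m = 0.
Proof.
move=> mj; rewrite [p]mpolyE mulr_sumr raddf_sum big1 // => m' _.
rewrite -scalerAr -mpolyXD /= mcoeffZ mcoeffX.
case E: (_ == _); last by rewrite mulr0.
by move: mj; rewrite -(eqP E) mnmDE mnm1E eqxx.
Qed.

Definition cong (j : 'I_n) (p q : R) := exists r, p = q + 'X_j * r.

Lemma cong_refl j p : cong j p p.
Proof. by exists 0; rewrite mulr0 addr0. Qed.

Lemma congM j p q p' q' : cong j p q -> cong j p' q' -> cong j (p * p') (q * q').
Proof.
move=> [r ->] [r' ->]; exists (r * q' + q * r' + 'X_j * r * r'); ring.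
Qed.

Lemma congX j p q k : cong j p q -> cong j (p ^+ k) (q ^+ k).
Proof.
move=> c; elim: k => [|k IH]; first by rewrite !expr0; apply: cong_refl.
by rewrite !exprS; apply: congM.
Qed.

Lemma cong_prod j (S : {set 'I_n}) (F G : 'I_n -> R) :
  (forall i, i \in S -> cong j (F i) (G i)) ->
  cong j (\prod_(i in S) F i) (\prod_(i in S) G i).
Proof.
move=> h; apply: (big_ind2 (cong j)); first exact: cong_refl.
  by move=> *; apply: congM.
exact: h.
Qed.

Lemma PS_zero (S : {set 'I_n}) (a : 'I_n -> nat) (j : 'I_n) : j \in S -> a j = 0%N ->
  (PS S a)@_(mS S a) = (PS (S :\ j) a)@_(mS (S :\ j) a).
Proof.
move=> jS aj.
set S' := S :\ j.
set mr : 'X_{1..n} := [multinom (if i \in S' then a i else 0%N) | i < n].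
have cS : #|S| = #|S'|.+1 by rewrite (cardsD1 j S) jS.
have em : mS S a = (mr + mS S' a)%MM.
  apply/mnmP => i; rewrite mnmDE !mnmE /S' in_setD1.
  case: (eqVneq i j) => [->|ij] /=; first by rewrite aj muln0; case: (_ \in _).
  by case: (i \in S) => //; rewrite cS mulSn.
have eX : ('X_[mr] : R) = \prod_(k in S') 'X_k ^+ a k.
  rewrite mpolyXE_id [RHS]big_mkcond /=; apply: eq_bigr => i _.
  by rewrite mnmE; case: (i \in S').
have eN : NS S a = NS S' a by rewrite /NS (bigD1 j) //= aj add0n; apply: eq_bigl => i; rewrite /S' in_setD1 andbC.
have eQ : \prod_(k in S) QS S k ^+ a k = \prod_(k in S') QS S k ^+ a k.
  by rewrite (bigD1 j) //= aj expr0 mul1r; apply: eq_bigl => i; rewrite /S' in_setD1 andbC.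
have hc : cong j (PS S a) ('X_[mr] * PS S' a).
  rewrite /PS eN eQ eX mulrCA -big_split /=.
  apply: congM.
    apply: congX; exists 1; rewrite mulr1 /sS (bigD1 j) //= addrC.
    by congr (_ + _); apply: eq_bigl => i; rewrite /S' in_setD1 andbC.
  apply: cong_prod => k kS'; rewrite -exprMn; apply: congX.
  move: kS'; rewrite /S' in_setD1 => /andP [kj kS].
  exists (- QS S' k); rewrite /QS (bigD1 j) /=; last by rewrite jS eq_sym.
  have -> : \prod_(i < n | (i \in S) && (i != k) && (i != j)) ('X_k - 'X_i) = \prod_(i in S' | i != k) ('X_k - 'X_i) :> R.
    by apply: eq_bigl => i; rewrite /S' in_setD1; case: (i \in S); case: (i != j); case: (i != k).
  rewrite /QS; ring.
case: hc => r ->; rewrite mcoeffD coefXjM0; last first.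
  by rewrite em mnmDE !mnmE /S' setD11.
by rewrite addr0 em mulrC mcoeffMX.
Qed.

Lemma mS_decr (S : {set 'I_n}) a j : j \in S -> (0 < a j)%N ->
  mS S a = (U_(j) *+ #|S| + mS S (decr a j))%MM.
Proof.
move=> jS aj; apply/mnmP => i; rewrite mnmDE mulmnE mnm1E !mnmE /decr.
case: (eqVneq j i) => [<-|ji]; first by rewrite jS mul1n addnC -mulnSr prednK.
by rewrite mul0n.
Qed.

Lemma NS_decr (S : {set 'I_n}) a j : j \in S -> (0 < a j)%N ->
  NS S (decr a j) = (NS S a).-1.
Proof.
move=> jS aj; rewrite /NS (bigD1 j) //= [in RHS](bigD1 j) //= /decr eqxx.
rewrite (eq_bigr a) => [|i /andP [_ /negbTE ->] //].
by move: aj; case: (a j).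
Qed.

Lemma core0 (a : 'I_n -> nat) :
  (PS set0 a)@_(mS set0 a) * (\prod_(i in set0) (a i)`!)%:R = (NS set0 a)`!%:R.
Proof.
rewrite /PS /NS /sS !big_set0 expr0 mulr1.
have -> : mS set0 a = 0%MM by apply/mnmP => i; rewrite mnmE mnm0E inE.
by rewrite mul1r mcoeff1 eqxx.
Qed.

Lemma core_rec k : forall (S : {set 'I_n}) (a : 'I_n -> nat), (NS S a + #|S| <= k)%N ->
  (PS S a)@_(mS S a) * (\prod_(i in S) (a i)`!)%:R = (NS S a)`!%:R.
Proof.
elim: k => [|k IH] S a.
  rewrite leqn0 addn_eq0 => /andP [_ /eqP /cards0_eq ->].
  exact: core0.
move=> hk.
case: (set_0Vmem S) => [->|[j0 j0S]]; first exact: core0.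
case: (boolP [exists j in S, a j == 0%N]) => [/existsP [j /andP [jS /eqP aj]]|].
  have eP : \prod_(i in S) (a i)`! = \prod_(i in S :\ j) (a i)`!.
    by rewrite (bigD1 j) //= aj fact0 mul1r; apply: eq_bigl => i; rewrite in_setD1 andbC.
  have eN : NS S a = NS (S :\ j) a.
    by rewrite /NS (bigD1 j) //= aj add0n; apply: eq_bigl => i; rewrite in_setD1 andbC.
  rewrite (PS_zero jS aj) eP eN; apply: IH.
  by move: hk; rewrite eN (cardsD1 j S) jS add1n addnS ltnS.
rewrite negb_exists => /forallP apos'.
have apos : forall j, j \in S -> (0 < a j)%N.
  by move=> j jS; have := apos' j; rewrite jS lt0n.
have S0 : S != set0 by apply/set0Pn; exists j0.
have N1 : (0 < NS S a)%N by rewrite /NS (bigD1 j0) //= addn_gt0 apos.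
rewrite (PS_rec S0 apos) raddf_sum /=.
under eq_bigr => j jS do rewrite (mS_decr jS (apos j jS)) coefXjM.
rewrite mulr_suml.
have key j : j \in S -> (PS S (decr a j))@_(mS S (decr a j)) * (\prod_(i in S) (a i)`!)%:R
    = (a j)%:R * ((NS S a).-1)`!%:R.
  move=> jS.
  have eP : \prod_(i in S) (a i)`! = (a j * \prod_(i in S) (decr a j i)`!)%N.
    rewrite (bigD1 j) //= [in RHS](bigD1 j) //= /decr eqxx.
    have -> : \prod_(i in S | i != j) (if i == j then (a i).-1 else a i)`! = \prod_(i in S | i != j) (a i)`!.
      by apply: eq_bigr => i /andP [_ /negbTE ->].
    by have := apos j jS; case: (a j) => // m _; rewrite factS /= mulnA.
  rewrite eP natrM mulrCA IH; first by rewrite NS_decr // apos.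
  by move: hk; rewrite -(prednK N1) addSn ltnS NS_decr ?apos.
rewrite (eq_bigr _ key) -mulr_suml -natr_sum -natrM.
by rewrite -/(NS S a) -[in RHS](prednK N1) factS prednK.
Qed.
End Core.

End Helpers.
Import Helpers.

Theorem mainTheorem18 (n : nat) (a : 'I_n -> nat) (hn : (0 < n)%N) :
  laurent_CT
    ((\sum_(i < n) zvar i) ^+ (\sum_(i < n) a i)%N
       / (\prod_(i < n) zvar i ^+ a i)
       * \prod_(i < n) \prod_(j < n | i != j) (1 - zvar i / zvar j) ^+ a j)
    ((\sum_(i < n) a i)`! %/ (\prod_(i < n) (a i)`!))%N%:Z.
Proof.
have eN : NS [set: 'I_n] a = (\sum_(i < n) a i)%N.
  by apply: eq_bigl => i; rewrite in_setT.
have core := core_rec (leqnn (NS [set: 'I_n] a + #|[set: 'I_n]|)).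
exists (PS [set: 'I_n] a), (mS [set: 'I_n] a); split; last first.
  move: core; rewrite eN.
  have -> : \prod_(i in [set: 'I_n]) (a i)`! = (\prod_(i < n) (a i)`!)%N.
    by apply: eq_bigl => i; rewrite in_setT.
  set c := _@__; set P := (\prod_(i < n) _)%N; set N := (\sum_(i < n) _)%N.
  have P0 : (0 < P)%N by rewrite /P prodn_gt0 // => i; exact: fact_gt0.
  case: c => m.
    rewrite !natz -PoszM => -[] <-.
    by rewrite mulnK.
  rewrite NegzE !natz mulNr -PoszM => /eqP; rewrite eq_sym -addr_eq0 -[_ + _]PoszD.
  by rewrite eqz_nat addn_eq0 (negbTE (lt0n_neq0 (fact_gt0 _))).
have z0 (j : 'I_n) : zvar j != 0.
  rewrite /zvar /tofracp tofrac_eq0; apply/eqP => h.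
  by have := @mcoeffXU n int j j; rewrite h mcoeff0 eqxx.
have hP : tofracp (PS [set: 'I_n] a) = (\sum_(i < n) zvar i) ^+ (\sum_(i < n) a i)%N
    * \prod_(j < n) (\prod_(i < n | i != j) (zvar j - zvar i)) ^+ a j.
  rewrite /tofracp /PS rmorphM rmorphXn rmorph_sum rmorph_prod /= eN.
  congr (_ ^+ _ * _).
    by apply: eq_bigl => i; rewrite in_setT.
  rewrite [LHS](eq_bigl (fun _ => true)) => [|i]; last by rewrite in_setT.
  apply: eq_bigr => j _; rewrite rmorphXn rmorph_prod /=; congr (_ ^+ _).
  rewrite [LHS](eq_bigl (fun i => i != j)) => [|i]; last by rewrite in_setT.
  by apply: eq_bigr => i _; rewrite rmorphB.
have hX : tofracp ('X_[mS [set: 'I_n] a] : {mpoly int[n]}) = \prod_(j < n) zvar j ^+ (n * a j).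
  rewrite /tofracp mpolyXE_id rmorph_prod; apply: eq_bigr => j _.
  by rewrite rmorphXn mnmE in_setT cardsT card_ord.
have hD : \prod_(i < n) \prod_(j < n | i != j) (1 - zvar i / zvar j) ^+ a j
    = (\prod_(j < n) (\prod_(i < n | i != j) (zvar j - zvar i)) ^+ a j)
      / \prod_(j < n) zvar j ^+ (n.-1 * a j).
  transitivity (\prod_(i < n) \prod_(j < n) (if i != j then ((zvar j - zvar i) / zvar j) ^+ a j else 1)).
    apply: eq_bigr => i _; rewrite big_mkcond; apply: eq_bigr => j _.
    by case: (i != j) => //; rewrite mulrBl divff.
  rewrite exchange_big -prodf_div; apply: eq_bigr => j _.
  rewrite -big_mkcond /= prodrXl prodf_div expr_div_n prodr_const.
  by rewrite cardC1 card_ord -exprM mulnC.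
rewrite hD /laurent_CT hP hX.
have -> : \prod_(j < n) zvar j ^+ (n * a j)
    = \prod_(j < n) zvar j ^+ a j * \prod_(j < n) zvar j ^+ (n.-1 * a j).
  rewrite -big_split; apply: eq_bigr => j _ /=. rewrite -exprD.
  by congr (_ ^+ _); rewrite -{1}(prednK hn) mulSn.
rewrite invfM; ring.
Qed.
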